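(* Let $R$ be a complete intersection SAGA of codimension $n+1$ presented by quadrics. If $[t_1],\dots,[t_k]\in\mathcal N_2$ are distinct points, then $\prod_{i=1}^k t_i\neq0$ in $R$ and $t_1,\dots,t_k$ are linearly independent in $R^1$. In particular $\#\mathcal N_2\le n+1$.
   Context: $\mathbb K$ is an algebraically closed field of characteristic $0$. A complete intersection SAGA of codimension $n+1$ presented by quadrics is $R=S/I$ with $S=\mathbb K[x_0,\dots,x_n]$ and $I$ generated by a regular sequence of $n+1$ homogeneous quadrics; it is a standard graded Artinian Gorenstein algebra with socle in degree $N=n+1$. $\mathcal N_k=\{[x]\in\mathbb P(R^1)\mid x^k=0\}$. *)

(* Defs.v *)
From mathcomp Require Import all_boot all_order all_algebra.
From mathcomp Require Export mpoly.
Set Implicit Arguments. Unset Strict Implicit. Unset Printing Implicit Defensive.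
Import GRing.Theory.
Local Open Scope ring_scope.

Definition in_ideal (K : fieldType) (n m : nat) (g : 'I_m -> {mpoly K[n]})
  (P : pred 'I_m) (p : {mpoly K[n]}) : Prop :=
  exists c : 'I_m -> {mpoly K[n]}, p = \sum_(i < m | P i) c i * g i.

Definition regular_sequence (K : fieldType) (n m : nat)
  (g : 'I_m -> {mpoly K[n]}) : Prop :=
  ~ in_ideal g xpredT 1 /\
  forall (i : 'I_m) (p : {mpoly K[n]}),
    in_ideal g (fun j : 'I_m => (j < i)%N) (p * g i) ->
    in_ideal g (fun j : 'I_m => (j < i)%N) p.

Definition CI_quadrics (K : fieldType) (n : nat)
  (q : 'I_n.+1 -> {mpoly K[n.+1]}) : Prop :=
  (forall i, q i \is 2.-homog) /\ regular_sequence q.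

(* Membership of a linear form t in N_2 (via a representative t of a
   nonzero class [t] in R^1 with t^2 = 0 in R = S/I). *)
Definition in_N2 (K : fieldType) (n : nat) (q : 'I_n.+1 -> {mpoly K[n.+1]})
  (t : {mpoly K[n.+1]}) : Prop :=
  t \is 1.-homog /\ ~ in_ideal q xpredT t /\ in_ideal q xpredT (t ^+ 2).

(* Main.v *)
Require Import Defs.
From mathcomp Require Import all_boot all_order all_algebra.
From mathcomp Require Import mpoly.
From mathcomp Require Import ring.
Import GRing.Theory.
Local Open Scope ring_scope.
Set Implicit Arguments. Unset Strict Implicit.

Section Ideals.
Variables (K : fieldType) (N : nat).
Local Notation S := {mpoly K[N]}.

Definition inI (s : seq S) (p : S) : Prop :=
  forall P : S -> Prop, P 0 -> (forall x y, P x -> P y -> P (x + y)) ->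
   (forall c x, P x -> P (c * x)) -> (forall a, a \in s -> P a) -> P p.

Lemma inI0 s : inI s 0. Proof. by move=> P. Qed.
Lemma inID s x y : inI s x -> inI s y -> inI s (x + y).
Proof. move=> hx hy P h0 hD hM hg; exact: (hD _ _ (hx P h0 hD hM hg) (hy P h0 hD hM hg)). Qed.
Lemma inIM s c x : inI s x -> inI s (c * x).
Proof. move=> hx P h0 hD hM hg; exact: (hM _ _ (hx P h0 hD hM hg)). Qed.
Lemma inIMr s c x : inI s x -> inI s (x * c).
Proof. by rewrite mulrC; apply: inIM. Qed.
Lemma inIg s a : a \in s -> inI s a.
Proof. by move=> ha P h0 hD hM hg; apply: hg. Qed.
Lemma inIN s x : inI s x -> inI s (- x).
Proof. by move=> h; rewrite -mulN1r; apply: inIM. Qed.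
Lemma inIB s x y : inI s x -> inI s y -> inI s (x - y).
Proof. by move=> hx hy; apply: inID => //; apply: inIN. Qed.
Lemma inIZ s (c : K) x : inI s x -> inI s (c *: x).
Proof. by move=> h; rewrite -mul_mpolyC; apply: inIM. Qed.
Lemma inI_sub s s' : {subset s <= s'} -> forall p, inI s p -> inI s' p.
Proof. move=> hs p hp P h0 hD hM hg; apply: hp => // a /hs; exact: hg. Qed.
Lemma inI_eq s s' : s =i s' -> forall p, inI s p <-> inI s' p.
Proof. by move=> e p; split; apply: inI_sub => x; rewrite e. Qed.
Lemma inI_sum (I : Type) (r : seq I) (F : I -> S) s :
  (forall i, inI s (F i)) -> inI s (\sum_(i <- r) F i).
Proof.
move=> h; elim: r => [|i r IH]; first by rewrite big_nil; apply: inI0.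
by rewrite big_cons; apply: inID.
Qed.

Lemma inI_sum_cond (I : finType) (P : pred I) (F : I -> S) s :
  (forall i, P i -> inI s (F i)) -> inI s (\sum_(i | P i) F i).
Proof.
move=> h; apply: (big_ind (inI s)); [exact: inI0 | exact: inID | exact: h].
Qed.

Lemma inI_cons a s p : inI (a :: s) p <-> exists c, inI s (p - c * a).
Proof.
split.
  move=> h; apply: (h (fun p => exists c, inI s (p - c * a))).
  - by exists 0; rewrite mul0r subr0; apply: inI0.
  - move=> x y [c hc] [d hd]; exists (c + d).
    have -> : x + y - (c + d) * a = (x - c * a) + (y - d * a) by ring.
    exact: inID.
  - move=> c x [d hd]; exists (c * d).
    have -> : c * x - c * d * a = c * (x - d * a) by ring.
    exact: inIM.
  - move=> b; rewrite inE => /orP [/eqP -> | hb].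
      by exists 1; rewrite mul1r subrr; apply: inI0.
    by exists 0; rewrite mul0r subr0; apply: inIg.
move=> [c hc]; have -> : p = (p - c * a) + c * a by ring.
apply: inID; first by apply: inI_sub hc => x hx; rewrite inE hx orbT.
by apply: inIM; apply: inIg; rewrite inE eqxx.
Qed.

Lemma inI_nil p : inI [::] p -> p = 0.
Proof. by move=> h; apply: (h (fun x => x = 0)) => // [x y -> ->|c x ->]; rewrite ?addr0 ?mulr0. Qed.

End Ideals.
Section H.
Variables (K : fieldType) (N : nat).
Local Notation S := {mpoly K[N]}.
Local Notation pih := (pihomog mdeg).

Lemma pih_homog d e (h : S) : h \is e.-homog -> pih d h = if e == d then h else 0.
Proof.
move=> he; case: eqP => [<-|/eqP ne]; first exact: pihomog_dE.
exact: pihomog_ne0 ne he.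
Qed.

Lemma pihM d e (p g : S) : g \is e.-homog ->
  pih d (p * g) = if (e <= d)%N then pih (d - e) p * g else 0.
Proof.
move=> hg; rewrite {1 2}[p]mpolyE big_distrl /= !raddf_sum /= big_distrl /=.
case: ifP => hed; last first.
  apply: big1 => m _; rewrite -scalerAl linearZ /=.
  rewrite (pih_homog d (e := (mdeg m + e)%N)); last first.
    by apply: dhomogM => //; rewrite dhomogX.
  case: eqP => [hh|]; last by rewrite scaler0.
  by move: hed; rewrite -hh leq_addl.
apply: eq_bigr => m _; rewrite -scalerAl !linearZ /= -scalerAl; congr (_ *: _).
rewrite (pih_homog d (e := (mdeg m + e)%N)); last first.
  by apply: dhomogM => //; rewrite dhomogX.
rewrite pihomogX.
have -> : (mdeg m + e == d)%N = (mdeg m == d - e)%N.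
  by apply/eqP/eqP => [<-|->]; [rewrite addnK | rewrite subnK].
by case: ifP => _; rewrite ?mul0r.
Qed.


Lemma pihM_gen d (c x : S) :
  pih d (c * x) = \sum_(j < mmeasure mdeg c)
     (if (j <= d)%N then pih (d - j) x * pih j c else 0).
Proof.
rewrite {1}(pihomog_partitionE (leqnn (mmeasure mdeg c))) big_distrl /= raddf_sum.
apply: eq_bigr => j _; rewrite mulrC; apply: pihM; exact: pihomogP.
Qed.

Definition homs (s : seq S) := forall a, a \in s -> exists2 e, (0 < e)%N & a \is e.-homog.

Lemma inI_pih s p d : homs s -> inI s p -> inI s (pih d p).
Proof.
move=> hs hp; move: d.
have H := hp (fun q => forall d, inI s (pih d q)); apply: H.
- by move=> d; rewrite raddf0; apply: inI0.
- by move=> x y hx hy d; rewrite raddfD; apply: inID; [apply: hx | apply: hy].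
- move=> c x hx d; rewrite pihM_gen; apply: inI_sum => j.
  by case: ifP => _; [apply: inIMr; apply: hx | apply: inI0].
- move=> a ha d; have [e _ he] := hs a ha; rewrite (pih_homog d he).
  by case: ifP => _; [apply: inIg | apply: inI0].
Qed.

Lemma inI_proper s : homs s -> ~ inI s 1.
Proof.
move=> hs h1.
have : pih 0 (1 : S) = 0.
  apply: (h1 (fun p => pih 0 p = 0)).
  - by rewrite raddf0.
  - by move=> x y hx hy; rewrite pihomogD hx hy addr0.
  - move=> c x hx; rewrite pihM_gen; apply: big1 => j _.
    case: ifP => // hj; rewrite leqn0 in hj; by rewrite (eqP hj) subnn hx mul0r.
  - move=> a ha; have [e he0 he] := hs a ha; rewrite (pih_homog 0 he).
    by case: eqP => // e0; rewrite e0 in he0.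
by rewrite (pih_homog 0 (dhomog1 _ _)) eqxx; apply/eqP; exact: oner_neq0.
Qed.


Fixpoint reg (J s : seq S) : Prop :=
  if s is a :: s' then (forall x, inI J (a * x) -> inI J x) /\ reg (a :: J) s'
  else True.

Lemma reg_eq (J J' : seq S) s : J =i J' -> reg J s -> reg J' s.
Proof.
elim: s J J' => [//|a s IH] J J' e /= [ha hs]; split.
  by move=> x; rewrite -!(inI_eq e); apply: ha.
by apply: IH hs => x; rewrite !inE e.
Qed.

Lemma reg_cat (J : seq S) s1 s2 : reg J (s1 ++ s2) <-> reg J s1 /\ reg (catrev s1 J) s2.
Proof.
elim: s1 J => [|a s1 IH] J /=; first by split=> // [[]].
rewrite IH; split; [by case=> h [h1 h2] | by case=> [[h h1] h2]].
Qed.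

Lemma inI_subr (s : seq S) a p : inI s p -> inI (a :: s) p.
Proof. by apply: inI_sub => x hx; rewrite inE hx orbT. Qed.

Lemma inI_swap a b (s : seq S) p : inI (a :: b :: s) p <-> inI (b :: a :: s) p.
Proof. by apply: inI_eq => x; rewrite !inE orbCA. Qed.

Section Swap.
Variables (J : seq S) (a b : S) (ea eb : nat).
Hypotheses (hJ : homs J) (ea0 : (0 < ea)%N) (eb0 : (0 < eb)%N)
  (ha : a \is ea.-homog) (hb : b \is eb.-homog).
Hypothesis (ra : forall x, inI J (a * x) -> inI J x).
Hypothesis (rb : forall x, inI (a :: J) (b * x) -> inI (a :: J) x).

Lemma swap_homog d : forall x, x \is d.-homog -> inI J (b * x) -> inI J x.
Proof.
elim/ltn_ind: d => d IH x hx hbx.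
have /rb /inI_cons [c hc] := inI_subr (a:=a) hbx.
have := inI_pih d hJ hc; rewrite pihomogB (pihomog_dE hx) (pihM _ _ ha).
case: ifP => hle; last by rewrite subr0.
set y := pih (d - ea) c => hxy.
have hy : y \is (d - ea).-homog by apply: pihomogP.
have : inI J (b * x - b * (x - y * a)) by apply: inIB => //; apply: inIM.
have -> : b * x - b * (x - y * a) = a * (b * y) by ring.
have hlt : (d - ea < d)%N by rewrite ltn_subrL ea0 (leq_trans ea0 hle).
move/ra/(IH (d - ea)%N hlt y hy) => hy'.
have -> : x = (x - y * a) + y * a by ring.
by apply: inID => //; apply: inIMr.
Qed.

Lemma swap_b x : inI J (b * x) -> inI J x.
Proof.
move=> hbx; rewrite (pihomog_partitionE (leqnn (mmeasure mdeg x))).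
apply: inI_sum => d; apply: (@swap_homog d); first exact: pihomogP.
have := inI_pih (d + eb) hJ hbx; rewrite mulrC (pihM _ _ hb) leq_addl addnK.
by rewrite mulrC.
Qed.

Lemma swap_a x : inI (b :: J) (a * x) -> inI (b :: J) x.
Proof.
move/inI_cons=> [z hz].
have : inI (a :: J) (b * z).
  apply/inI_cons; exists x.
  have -> : b * z - x * a = - (a * x - z * b) by ring.
  exact: inIN.
move/rb/inI_cons=> [w hw].
have : inI J (a * (x - w * b)).
  have -> : a * (x - w * b) = (a * x - z * b) + b * (z - w * a) by ring.
  by apply: inID => //; apply: inIM.
move/ra=> h; apply/inI_cons; exists w; exact: h.
Qed.

End Swap.

Definition hom1 (a : S) := exists2 e, (0 < e)%N & a \is e.-homog.


Lemma reg_swap (J : seq S) a b s : homs J -> hom1 a -> hom1 b ->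
  reg J (a :: b :: s) -> reg J (b :: a :: s).
Proof.
move=> hJ [ea ea0 ha] [eb eb0 hb] /= [ra [rb rs]]; split.
  exact: (swap_b hJ ea0 ha hb ra rb).
split; first exact: (swap_a ra rb).
by apply: reg_eq rs => x; rewrite !inE orbCA.
Qed.

Lemma homs_cons (a : S) s : homs (a :: s) <-> hom1 a /\ homs s.
Proof.
split=> [h|[ha hs] x]; last by rewrite inE => /orP [/eqP ->|/hs].
by split=> [|x hx]; apply: h; rewrite inE ?eqxx ?hx ?orbT.
Qed.

Lemma reg_move (J : seq S) a s : homs J -> homs (a :: s) -> reg J (a :: s) -> reg J (rcons s a).
Proof.
elim: s J => [//|b s IH] J hJ /homs_cons [ha /homs_cons [hb hs]] h.
have /= [rb rs] := reg_swap hJ ha hb h; split => //.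
apply: IH => //; first by apply/homs_cons.
by apply/homs_cons.
Qed.

Lemma reg_pos (J : seq S) s1 a s2 : homs J -> homs (s1 ++ a :: s2) ->
  reg J (s1 ++ a :: s2) -> reg J (s1 ++ rcons s2 a).
Proof.
elim: s1 J => [|b s1 IH] J hJ /=; first exact: reg_move.
move=> /homs_cons [hb hs] [rb rs]; split => //; apply: IH => //.
exact/homs_cons.
Qed.


Lemma reg_last (J : seq S) s a : reg J (rcons s a) <->
  reg J s /\ (forall x, inI (catrev s J) (a * x) -> inI (catrev s J) x).
Proof. by rewrite -cats1 reg_cat /=; split=> [[h [h1 _]]|[h h1]]. Qed.

Lemma reg_replace (J : seq S) s a b (c : K) : c != 0 ->
  inI (catrev s J) (b - c *: a) -> reg J (rcons s a) -> reg J (rcons s b).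
Proof.
move=> c0 hb /reg_last [hs ha]; apply/reg_last; split => // x hx; apply: ha.
have : inI (catrev s J) (c *: (a * x)).
  have -> : c *: (a * x) = b * x - (b - c *: a) * x.
    by rewrite -!mul_mpolyC; ring.
  by apply: inIB => //; apply: inIMr.
move/(inIZ c^-1); by rewrite scalerA mulVf // scale1r.
Qed.

Lemma reg_sqrt (J : seq S) s t : reg J (rcons s (t * t)) -> reg J (rcons s t).
Proof.
move=> /reg_last [hs ht]; apply/reg_last; split => // x hx; apply: ht.
by rewrite -mulrA; apply: inIM.
Qed.

Lemma lin_expand (p : S) : p \is 1.-homog ->
  p = \sum_(i < N) p@_U_(i) *: 'X_i.
Proof.
move=> hp; apply/mpolyP => m; rewrite raddf_sum /=.
under eq_bigr => i _ do rewrite mcoeffZ mcoeffX.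
case: (boolP (mdeg m == 1%N)) => [/mdeg1P [j /eqP ->]|hm].
  rewrite (bigD1 j) //= eqxx mulr1 big1 ?addr0 // => i hij.
  case: eqP => [/(congr1 (fun m : 'X_{1..N} => m j))|]; last by rewrite mulr0.
  by rewrite !mnm1E eqxx (negbTE hij).
rewrite (dhomog_nemf_coeff hp hm) big1 // => i _.
case: eqP => [e|]; last by rewrite mulr0.
by move: hm; rewrite -e mdeg1.
Qed.

Lemma lin_eval (p : S) v : p \is 1.-homog ->
  p.@[v] = \sum_(i < N) p@_U_(i) * v i.
Proof.
move=> hp; rewrite {1}(lin_expand hp) raddf_sum /=.
by apply: eq_bigr => i _; rewrite mevalZ mevalXU.
Qed.

Definition vecl (p : S) : 'rV[K]_N := \row_i p@_U_(i).

Lemma LA (L : seq S) (t : S) : (forall l, l \in L -> l \is 1.-homog) ->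
  t \is 1.-homog -> ~ inI L t ->
  exists v, (forall l, l \in L -> l.@[v] = 0) /\ t.@[v] != 0.
Proof.
move=> hL ht hnt.
pose M : 'M[K]_(size L, N) := \matrix_(r, j) (nth 0 L r)@_U_(j).
case: (boolP (vecl t <= M)%MS) => [/submxP [w hw]|].
  exfalso; apply: hnt.
  have -> : t = \sum_(r < size L) w 0 r *: nth 0 L r.
    rewrite (lin_expand ht).
    under [in RHS]eq_bigr => r _ do rewrite (lin_expand (hL _ (mem_nth 0 (ltn_ord r)))) scaler_sumr.
    rewrite exchange_big /=; apply: eq_bigr => j _.
    have := congr1 (fun A : 'rV_N => A 0 j) hw; rewrite !mxE => ->.
    rewrite scaler_suml; apply: eq_bigr => r _; rewrite scalerA mxE //.
  by apply: inI_sum => r; apply: inIZ; apply: inIg; exact: mem_nth.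
rewrite submxE => hC.
have [j hj] : exists j, (vecl t *m cokermx M) 0 j != 0.
  apply/existsP; move: hC; apply: contraNT; rewrite negb_exists => /forallP h.
  by apply/eqP/matrixP => i k; rewrite ord1 [RHS]mxE; apply/eqP; move: (h k); rewrite negbK.
exists (fun i => cokermx M i j); split.
  move=> l hl; rewrite (lin_eval _ (hL _ hl)).
  have [r hr <-] : exists2 r : 'I_(size L), true & nth 0 L r = l.
    have hi : (index l L < size L)%N by rewrite index_mem.
    by exists (Ordinal hi) => //; rewrite nth_index.
  rewrite -[RHS](_ : (M *m cokermx M) r j = 0); last by rewrite mulmx_coker mxE.
  by rewrite mxE; apply: eq_bigr => i _; rewrite [M r i]mxE.
rewrite (lin_eval _ ht); move: hj; rewrite mxE.
by under eq_bigr => i _ do rewrite mxE.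
Qed.


Lemma inI_gen (s s' : seq S) p : (forall a, a \in s -> inI s' a) -> inI s p -> inI s' p.
Proof.
move=> h hp; apply: (hp (inI s') (@inI0 _ _ s') (@inID _ _ s') (@inIM _ _ s') h).
Qed.

Lemma homog0_const (p : S) : p \is 0.-homog -> p = (p@_0)%:MP.
Proof.
move=> hp; apply/mpolyP => m; rewrite mcoeffC.
case: (eqVneq m 0%MM) => [->|hm]; first by rewrite mulr1.
rewrite mulr0; apply: (dhomog_nemf_coeff hp).
by apply: contra hm; rewrite mdeg_eq0.
Qed.

Definition homs2 (s : seq S) := forall a, a \in s -> a \is 1.-homog \/ a \is 2.-homog.

Lemma homs2_homs s : homs2 s -> homs s.
Proof. by move=> h a /h [h1|h2]; [exists 1%N | exists 2%N]. Qed.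

Lemma deg1_extract (g : seq S) t x : homs g -> t \is 1.-homog -> x \is 1.-homog ->
  inI (t :: g) x -> exists c : K, inI g (x - c *: t).
Proof.
move=> hg ht hx /inI_cons [h hh].
have := inI_pih 1 hg hh; rewrite pihomogB (pihomog_dE hx) (pihM _ _ ht) leqnn subnn.
rewrite (homog0_const (pihomogP _ _ h)) mul_mpolyC => H; by eexists; exact: H.
Qed.

Lemma exch (g : seq S) p : homs2 g -> p \is 2.-homog -> inI g p ->
  (forall v, (forall l, l \in g -> l \is 1.-homog -> l.@[v] = 0) -> p.@[v] = 0) \/
  exists s1 a s2 (c : K), [/\ g = s1 ++ a :: s2, c != 0 & inI (s1 ++ s2) (p - c *: a)].
Proof.
elim: g p => [|a g IH] p hg hp.
  by move/inI_nil => ->; left => v _; rewrite meval0.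
have hg0 : homs2 g by move=> x hx; apply: hg; rewrite inE hx orbT.
have hsg0 := homs2_homs hg0.
move/inI_cons => [h hh]; have := inI_pih 2 hsg0 hh; rewrite pihomogB (pihomog_dE hp).
have [ha|ha] : a \is 1.-homog \/ a \is 2.-homog by apply: hg; rewrite inE eqxx.
  rewrite (pihM _ _ ha) /= => hp'.
  have hp'h : p - pih 1 h * a \is 2.-homog.
    by apply: rpredB => //; apply: (@dhomogM _ _ mdeg 1 _ 1) => //; apply: pihomogP.
  case: (IH _ hg0 hp'h hp') => [hl|[s1 [b [s2 [c [e c0 hi]]]]]].
    left => v hv.
    have : (p - pih 1 h * a).@[v] = 0 by apply: hl => l hl; apply: hv; rewrite inE hl orbT.
    by rewrite mevalB mevalM (hv a _ ha) ?inE ?eqxx // mulr0 subr0.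
  right; exists (a :: s1), b, s2, c; split => //; first by rewrite e.
  apply/inI_cons; exists (pih 1 h).
  by have -> : p - c *: b - pih 1 h * a = p - pih 1 h * a - c *: b by ring.
rewrite (pihM _ _ ha) /= subnn (homog0_const (pihomogP _ _ h)) mul_mpolyC => hp'.
set c := (pih 0 h)@_0 in hp'.
case: (eqVneq c 0) => [c0|c0].
  rewrite c0 scale0r subr0 in hp'.
  case: (IH _ hg0 hp hp') => [hl|[s1 [b [s2 [d [e d0 hi]]]]]].
    by left => v hv; apply: hl => l hl; apply: hv; rewrite inE hl orbT.
  right; exists (a :: s1), b, s2, d; split => //; first by rewrite e.
  exact: inI_subr.
by right; exists [::], a, g, c.
Qed.


Lemma homs2_sub (s s' : seq S) : {subset s <= s'} -> homs2 s' -> homs2 s.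
Proof. by move=> h hs a /h /hs. Qed.

Lemma exchange (g : seq S) t : homs2 g -> reg [::] g -> t \is 1.-homog ->
  ~ inI g t -> inI g (t * t) ->
  exists g', [/\ homs2 g', reg [::] (rcons g' (t * t))
             & forall p, inI g p <-> inI (t * t :: g') p].
Proof.
move=> hg rg ht hnt htt.
have htt2 : t * t \is 2.-homog by apply: (@dhomogM _ _ mdeg 1 _ 1).
case: (exch hg htt2 htt) => [hl|[s1 [a [s2 [c [e c0 hi]]]]]].
  exfalso.
  have hL : forall l, l \in [seq l <- g | l \is 1.-homog] -> l \is 1.-homog.
    by move=> l; rewrite mem_filter => /andP [].
  have [v [hv htv]] := LA hL ht (fun h => hnt (inI_sub (mem_subseq (filter_subseq _ _)) h)).
  have : (t * t).@[v] = 0 by apply: hl => l hl h1; apply: hv; rewrite mem_filter h1 hl.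
  by rewrite mevalM => /eqP; rewrite mulf_eq0 orbb (negbTE htv).
exists (s1 ++ s2); split.
- by apply: homs2_sub hg => x; rewrite e !mem_cat inE => /orP [->|->]; rewrite ?orbT.
- have hJ0 : homs ([::] : seq S) by move=> x.
  have := @reg_pos [::] s1 a s2 hJ0; rewrite -e -rcons_cat => /(_ (homs2_homs hg) rg).
  apply: reg_replace c0 _; apply: inI_sub hi => x; by rewrite (_ : catrev _ _ = rev (s1 ++ s2)) // mem_rev.
- move=> p; split; apply: inI_gen => x.
    rewrite e mem_cat inE => /orP [hx|/orP [/eqP ->|hx]].
    + by apply: inIg; rewrite inE mem_cat hx orbT.
    + have -> : a = c^-1 *: (t * t - (t * t - c *: a)).
        by rewrite opprB addrC subrK scalerA mulVf // scale1r.
      apply: inIZ; apply: inIB; first by apply: inIg; rewrite inE eqxx.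
      exact: inI_subr.
    + by apply: inIg; rewrite inE mem_cat hx !orbT.
  rewrite inE => /orP [/eqP ->|hx]; first by [].
  by apply: inIg; move: hx; rewrite e !mem_cat inE => /orP [->|->]; rewrite ?orbT.
Qed.


Definition dist (g : seq S) x y := forall c : K, ~ inI g (x - c *: y).

Lemma mainL (h2 : (2%:R : K) != 0) (ts : seq S) : forall g : seq S,
  homs2 g -> reg [::] g -> uniq ts ->
  (forall x, x \in ts -> [/\ x \is 1.-homog, ~ inI g x & inI g (x * x)]) ->
  (forall x y, x \in ts -> y \in ts -> x != y -> dist g x y) ->
  ~ inI g (\prod_(x <- ts) x).
Proof.
elim: ts => [|t ts IH] g hg rg.
  by move=> _ _ _; rewrite big_nil; apply: inI_proper; apply: homs2_homs.
move=> /= /andP [tnin uts] hts hd.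
have [ht hnt htt] := hts t (mem_head _ _).
have inT : forall x, x \in ts -> x \in t :: ts by move=> x hx; rewrite inE hx orbT.
have [g' [hg' rg' eqg]] := exchange hg rg ht hnt htt.
have rg'' := reg_sqrt rg'.
have hg'' : homs2 (rcons g' t).
  move=> x; rewrite mem_rcons inE => /orP [/eqP ->|]; [by left | exact: hg'].
have e'' : rcons g' t =i t :: g' by move=> x; rewrite mem_rcons.
have sub1 : forall p, inI g' p -> inI g p.
  by move=> p hp; apply/eqg; apply: inI_subr.
have sub2 : forall p, inI g p -> inI (t :: g') p.
  move=> p /eqg; apply: inI_gen => x; rewrite inE => /orP [/eqP ->|hx].
    by apply: inIM; apply: inIg; rewrite inE eqxx.
  by apply: inIg; rewrite inE hx orbT.
have regt : forall y, inI g' (t * y) -> inI g' y.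
  have /reg_last [_ H] := rg''.
  have er : catrev g' [::] =i g' by move=> x; rewrite (_ : catrev _ _ = rev g') // mem_rev.
  by move=> y; rewrite -!(inI_eq er); apply: H.
have key : forall y, inI g (y * t) -> inI (t :: g') y.
  move=> y /eqg /inI_cons [h hh]; apply/inI_cons; exists h; apply: regt.
  by rewrite mulrBr mulrC mulrA [t * h]mulrC -mulrA.
have hg's : homs g' by apply: homs2_homs.
have D1 : forall x, x \is 1.-homog -> inI (t :: g') x -> exists c : K, inI g (x - c *: t).
  by move=> x hx /(deg1_extract hg's ht hx) [c hc]; exists c; apply: sub1.
have dt : forall x, x \in ts -> dist g x t.
  move=> x hx; apply: hd; rewrite ?inE ?hx ?orbT ?eqxx //.
  by apply: contraNneq tnin => <-.
have dt' : forall x, x \in ts -> dist g t x.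
  move=> x hx; apply: hd; rewrite ?inE ?hx ?orbT ?eqxx //.
  by apply: contraNneq tnin => ->.
have IH' := IH (rcons g' t) hg'' rg'' uts.
rewrite big_cons => hP; apply: IH'.
- move=> x hx; have [hx1 hnx hxx] := hts x (inT x hx).
  split => //.
    rewrite (inI_eq e'') => /(D1 _ hx1) [c hc]; exact: (dt x hx c).
  by rewrite (inI_eq e''); apply: sub2.
- move=> x y hx hy nxy c; rewrite (inI_eq e'') => hc.
  have [hx1 _ hxx] := hts x (inT x hx).
  have [hy1 hny hyy] := hts y (inT y hy).
  have hl : x - c *: y \is 1.-homog by apply: rpredB => //; apply: rpredZ.
  have [d hdd] := D1 _ hl hc.
  case: (eqVneq c 0) => [c0|c0].
    by apply: (dt x hx d); rewrite c0 scale0r subr0 in hdd.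
  case: (eqVneq d 0) => [d0|d0].
    by rewrite d0 scale0r subr0 in hdd; exact: (hd x y (inT x hx) (inT y hy) nxy c hdd).
  have : inI g (y * t).
    set r := x - c *: y - d *: t in hdd.
    have E : y * t = (2%:R * c * d)^-1 *: (x * x - r * (x + c *: y + d *: t)
                     - (c * c) *: (y * y) - (d * d) *: (t * t)).
      rewrite /r -!mul_mpolyC.
      have hcd : (2%:R * c * d) != 0 by rewrite !mulf_neq0.
      apply: (@mulfI _ ((2%:R * c * d)%:MP)).
        by rewrite mpolyC_eq0.
      rewrite [RHS]mulrA -mpolyCM mulfV // mul1r !mpolyCM mpolyCMn.
      rewrite (_ : (1%:MP : S) = 1) //. ring.
    rewrite E; apply: inIZ; apply: inIB; last by apply: inIZ.
    apply: inIB; last by apply: inIZ.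
    by apply: inIB => //; apply: inIMr.
  move/key/(D1 _ hy1) => [e he]; exact: (dt y hy e).
- by rewrite (inI_eq e''); apply: key; rewrite mulrC.
Qed.


Lemma indep k (t : 'I_k -> S) (g : seq S) :
  (forall i, inI g (t i * t i)) -> ~ inI g (\prod_(i < k) t i) ->
  forall c : 'I_k -> K, inI g (\sum_(i < k) c i *: t i) -> forall i, c i = 0.
Proof.
move=> htt hP c hc i0; apply/eqP; apply/negPn/negP => c0; apply: hP.
pose P' := \prod_(j < k | j != i0) t j.
rewrite (bigD1 i0) //= -/P'.
have -> : t i0 * P' = (c i0)^-1 *: ((\sum_(i < k) c i *: t i) * P'
            - \sum_(j < k | j != i0) c j *: (t j * P')).
  rewrite (bigD1 i0) //= mulrDl -scalerAl.
  rewrite big_distrl /= (eq_bigr (fun j => c j *: (t j * P'))); last first.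
    by move=> j _; rewrite -scalerAl.
  by rewrite addrK scalerA mulVf // scale1r.
apply: inIZ; apply: inIB; first exact: inIMr.
apply: inI_sum_cond => j hj; apply: inIZ.
rewrite /P' (bigD1 j) //= mulrA; exact: inIMr.
Qed.

Lemma kbound k (t : 'I_k -> S) (g : seq S) : (forall i, t i \is 1.-homog) ->
  (forall c : 'I_k -> K, inI g (\sum_(i < k) c i *: t i) -> forall i, c i = 0) ->
  (k <= N)%N.
Proof.
move=> ht hc.
pose T : 'M[K]_(k, N) := \matrix_(i, j) (t i)@_U_(j).
suff : \rank T = k by move=> <-; apply: rank_leq_col.
apply/eqP; rewrite eqn_leq rank_leq_row /= leqNgt; apply/negP => hlt.
have : kermx T != 0.
  by rewrite -mxrank_eq0 mxrank_ker subn_eq0 -ltnNge.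
apply/negP; rewrite negbK; apply/eqP/row_matrixP => r; rewrite row0.
set w := row r (kermx T).
have hw : w *m T = 0 by rewrite /w -row_mul mulmx_ker row0.
apply/rowP => i0; rewrite [RHS]mxE; apply: (hc (fun i => w 0 i)); last first.
suff -> : \sum_(i < k) w 0 i *: t i = 0 by exact: inI0.
under eq_bigr => i _ do rewrite (lin_expand (ht i)) scaler_sumr.
rewrite exchange_big /=; apply: big1 => j _.
under eq_bigr => i _ do rewrite scalerA.
rewrite -scaler_suml.
have := congr1 (fun A : 'rV_N => A 0 j) hw; rewrite !mxE => E.
rewrite (eq_bigr (fun i => w 0 i * T i j)); first by rewrite E scale0r.
by move=> i _; rewrite [T i j]mxE.
Qed.


Lemma in_ideal_inI m (g : 'I_m -> S) (P : pred 'I_m) p :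
  in_ideal g P p <-> inI [seq g i | i <- [seq i <- enum 'I_m | P i]] p.
Proof.
split.
  move=> [c ->]; apply: inI_sum_cond => i Pi; apply: inIM; apply: inIg.
  by apply: map_f; rewrite mem_filter Pi mem_enum.
move=> hp; apply: (hp (in_ideal g P)).
- by exists (fun _ => 0); rewrite big1 // => i _; rewrite mul0r.
- move=> x y [c1 ->] [c2 ->]; exists (fun i => c1 i + c2 i).
  by rewrite -big_split; apply: eq_bigr => i _; rewrite mulrDl.
- move=> c x [c1 ->]; exists (fun i => c * c1 i).
  by rewrite mulr_sumr; apply: eq_bigr => i _; rewrite mulrA.
- move=> a /mapP [i]; rewrite mem_filter => /andP [Pi _] ->.
  exists (fun j => (j == i)%:R); rewrite (bigD1 i) //= eqxx mul1r big1 ?addr0 //.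
  by move=> j /andP [_ hj]; rewrite (negbTE hj) mul0r.
Qed.

Lemma reg_of (J s : seq S) :
  (forall i, (i < size s)%N -> forall x, inI (take i s ++ J) (nth 0 s i * x) ->
     inI (take i s ++ J) x) -> reg J s.
Proof.
elim: s J => [//|a s IH] J h /=; split.
  by move=> x; have := h 0%N isT x; rewrite take0.
apply: IH => i hi x.
have e : take i s ++ a :: J =i take i.+1 (a :: s) ++ J.
  by move=> y; rewrite /= mem_cat !in_cons mem_cat; case: (y == a); rewrite ?orbT.
rewrite !(inI_eq e); exact: (h i.+1 hi x).
Qed.

Lemma take_enum m i : take i (enum 'I_m) =i [seq j <- enum 'I_m | (nat_of_ord j < i)%N].
Proof.
move=> j; rewrite mem_filter mem_enum andbT.
rewrite -(mem_map val_inj) map_take val_enum_ord take_iota mem_iota add0n /=.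
by rewrite leq_min ltn_ord andbT.
Qed.

Lemma regseq_reg m (g : 'I_m -> S) : regular_sequence g -> reg [::] (map g (enum 'I_m)).
Proof.
move=> [_ hr]; apply: reg_of => i; rewrite size_map size_enum_ord => hi x.
have e : take i (map g (enum 'I_m)) ++ [::] =i
         [seq g j | j <- [seq j <- enum 'I_m | (nat_of_ord j < i)%N]].
  by rewrite cats0 -map_take; apply: eq_mem_map; apply: take_enum.
rewrite !(inI_eq e) -!in_ideal_inI (nth_map (Ordinal hi)) ?size_enum_ord //.
have -> : nth (Ordinal hi) (enum 'I_m) i = Ordinal hi by apply: val_inj; rewrite /= nth_enum_ord.
rewrite mulrC; exact: (hr (Ordinal hi)).
Qed.

End H.

Theorem mainTheorem4 (K : closedFieldType) (char0 : [pchar K] =i pred0)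
  (n : nat) (q : 'I_n.+1 -> {mpoly K[n.+1]}) (HR : CI_quadrics q)
  (k : nat) (t : 'I_k -> {mpoly K[n.+1]})
  (HN2 : forall i, in_N2 q (t i))
  (Hdist : forall i j : 'I_k, i != j ->
             forall c : K, ~ in_ideal q xpredT (t i - c *: t j)) :
  [/\ ~ in_ideal q xpredT (\prod_(i < k) t i),
      (forall c : 'I_k -> K,
         in_ideal q xpredT (\sum_(i < k) c i *: t i) -> forall i, c i = 0)
    & (k <= n.+1)%N].
Proof.
set gl := map q (enum 'I_n.+1).
have eqI : forall p, in_ideal q xpredT p <-> inI gl p.
  by move=> p; rewrite in_ideal_inI filter_predT.
have h2 : (2%:R : K) != 0 by have := char0 2%N; rewrite !inE /= => ->.
have hs2 : homs2 gl.
  by move=> a /mapP [i _ ->]; right; case: HR => hq _; apply: hq.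
have rg : reg [::] gl by apply: regseq_reg; case: HR.
have tinj : injective t.
  move=> i j e; apply/eqP; apply/negP => /negP /Hdist /(_ 1); apply.
  by rewrite e scale1r subrr; exists (fun _ => 0); rewrite big1 // => l _; rewrite mul0r.
have hN : forall i, [/\ t i \is 1.-homog, ~ inI gl (t i) & inI gl (t i * t i)].
  move=> i; have [h1 [h2' h3]] := HN2 i; split => //.
    by rewrite -eqI.
  by rewrite -eqI -expr2.
have C1 : ~ inI gl (\prod_(i < k) t i).
  have -> : \prod_(i < k) t i = \prod_(x <- map t (enum 'I_k)) x.
    by rewrite big_map big_enum.
  apply: (mainL h2) => //.
  - by rewrite map_inj_uniq ?enum_uniq.
  - by move=> x /mapP [i _ ->]; apply: hN.
  - move=> x y /mapP [i _ ->] /mapP [j _ ->] nxy c; rewrite -eqI.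
    by apply: Hdist; apply: contra nxy => /eqP ->.
have C2 : forall c : 'I_k -> K, inI gl (\sum_(i < k) c i *: t i) -> forall i, c i = 0.
  by apply: indep => // i; have [] := hN i.
split.
- by rewrite eqI.
- by move=> c; rewrite eqI; apply: C2.
- have ht1 : forall i, t i \is 1.-homog by move=> i; have [] := hN i.
  exact: (kbound ht1 C2).
Qed.
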